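(* Let $\mathcal{A}\in\mathbb{R}^{[n_1,\ldots,n_m]}$. Then $\mathcal{A}$ is $\mathbb{R}$-Hermitian decomposable if and only if $\mathcal{A}_{i_1\ldots i_m j_1\ldots j_m}=\mathcal{A}_{k_1\ldots k_m l_1\ldots l_m}$ for all indices such that $\{i_s,j_s\}=\{k_s,l_s\}$ for every $s=1,\ldots,m$.
   Context: For positive integers $n_1,\ldots,n_m$, $\mathbb{R}^{[n_1,\ldots,n_m]}$ denotes the set of real tensors $\mathcal{H}\in\mathbb{R}^{n_1\times\cdots\times n_m\times n_1\times\cdots\times n_m}$ with $\mathcal{H}_{i_1\ldots i_m j_1\ldots j_m}=\mathcal{H}_{j_1\ldots j_m i_1\ldots i_m}$ for all indices (real Hermitian tensors). For vectors $v_i$, $[v_1,\ldots,v_m]_{\otimes h}:=v_1\otimes\cdots\otimes v_m\otimes\overline{v_1}\otimes\cdots\otimes\overline{v_m}$. A tensor $\mathcal{H}\in\mathbb{R}^{[n_1,\ldots,n_m]}$ is called $\mathbb{R}$-Hermitian decomposable if $\mathcal{H}=\sum_{i=1}^r\lambda_i[u_i^1,\ldots,u_i^m]_{\otimes h}$ for some real vectors $u_i^j\in\mathbb{R}^{n_j}$ and real scalars $\lambda_i$. *)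

(* Defs.v *)
From HB Require Import structures.
From mathcomp Require Import all_boot all_order all_algebra.
From mathcomp Require Import reals.
Set Implicit Arguments. Unset Strict Implicit. Unset Printing Implicit Defensive.
Import Order.TTheory GRing.Theory Num.Theory.
Local Open Scope ring_scope.

Definition mindex (m : nat) (n : 'I_m -> nat) := forall s : 'I_m, 'I_(n s).

(* A real tensor in R^{n_1 x ... x n_m x n_1 x ... x n_m}:
   T i j = T_{i_1..i_m j_1..j_m}. *)
Definition tensor (R : Type) (m : nat) (n : 'I_m -> nat) :=
  mindex n -> mindex n -> R.

Definition is_real_hermitian (R : Type) (m : nat) (n : 'I_m -> nat)
  (H : tensor R n) : Prop :=
  forall i j : mindex n, H i j = H j i.

(* [v_1,...,v_m]_{(x)h} for real vectors (conjugation is the identity) *)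
Definition hrank1 (R : realType) (m : nat) (n : 'I_m -> nat)
  (v : forall s : 'I_m, 'I_(n s) -> R) : tensor R n :=
  fun i j => (\prod_(s < m) v s (i s)) * (\prod_(s < m) v s (j s)).

Definition R_hermitian_decomposable (R : realType) (m : nat) (n : 'I_m -> nat)
  (H : tensor R n) : Prop :=
  exists (r : nat) (lam : 'I_r -> R) (u : 'I_r -> forall s : 'I_m, 'I_(n s) -> R),
    forall i j : mindex n, H i j = \sum_(k < r) lam k * hrank1 (u k) i j.

(* Main.v *)
Require Import Defs.
From HB Require Import structures.
From mathcomp Require Import all_boot all_order all_algebra.
From mathcomp Require Import reals ring lra zify.
Set Implicit Arguments. Unset Strict Implicit. Unset Printing Implicit Defensive.
Import Order.TTheory GRing.Theory Num.Theory.
Local Open Scope ring_scope.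

Lemma set2_mul (R : comRingType) (p : nat) (v : 'I_p -> R) (i j k l : 'I_p) :
  [set i; j] = [set k; l] -> v i * v j = v k * v l.
Proof.
move=> E.
have Hk : k \in [set i; j] by rewrite E !inE eqxx.
have Hl : l \in [set i; j] by rewrite E !inE eqxx orbT.
have Hi : i \in [set k; l] by rewrite -E !inE eqxx.
have Hj : j \in [set k; l] by rewrite -E !inE eqxx orbT.
move: Hk Hl Hi Hj; rewrite !inE.
by do 4 (case/orP => /eqP ?); subst => //; rewrite mulrC.
Qed.

Lemma hrank1E (R : realType) (m : nat) (n : 'I_m -> nat)
  (v : forall s : 'I_m, 'I_(n s) -> R) i j :
  hrank1 v i j = \prod_(s < m) (v s (i s) * v s (j s)).
Proof. by rewrite /hrank1 big_split. Qed.

Lemma decomp_fin (R : realType) (m : nat) (n : 'I_m -> nat) (A : tensor R n)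
  (T : finType) (lam : T -> R) (u : T -> forall s : 'I_m, 'I_(n s) -> R) :
  (forall i j, A i j = \sum_(x : T) lam x * hrank1 (u x) i j) ->
  R_hermitian_decomposable A.
Proof.
move=> H; exists #|T|, (fun k => lam (enum_val k)), (fun k => u (enum_val k)).
by move=> i j; rewrite H big_enum_val.
Qed.

Definition ei (R : realType) p (a x : 'I_p) : R := (x == a)%:R.
Definition ww (R : realType) p (a b : 'I_p) (t : bool) (x : 'I_p) : R :=
  if a == b then ei R a x else if t then ei R a x + ei R b x else ei R a x - ei R b x.
Definition cc (R : realType) p (a b : 'I_p) (t : bool) : R :=
  if (a < b)%N then (if t then 2^-1 else - 2^-1)
  else if a == b then (if t then 1 else 0) else 0.
Definition mn p (x y : 'I_p) := if (x <= y)%N then x else y.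
Definition mx p (x y : 'I_p) := if (x <= y)%N then y else x.

Lemma S_ind (R : realType) p (a b x y : 'I_p) :
  \sum_(t : bool) cc R a b t * (ww R a b t x * ww R a b t y)
  = ((a == mn x y) && (b == mx x y))%:R.
Proof.
rewrite big_bool /cc /ww /mn /mx /ei /=.
case: (leqP x y) => hxy; case: (ltnP a b) => hab; rewrite -!val_eqE /=;
repeat match goal with |- context [(?u == ?v)%N] => case: (@eqP _ u v) => ? end;
rewrite /=; try lia; field.
all: done.
Qed.

Theorem theorem3p2 (R : realType) (m : nat) (n : 'I_m -> nat) (A : tensor R n) :
  is_real_hermitian A ->
  (R_hermitian_decomposable A <->
   forall i j k l : mindex n,
     (forall s : 'I_m, [set i s; j s] = [set k s; l s]) -> A i j = A k l).
Proof.
move=> _; split.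
  move=> [r [lam [u H]]] i j k l E; rewrite !H; apply: eq_bigr => x _.
  rewrite !hrank1E; congr (_ * _); apply: eq_bigr => s _; exact: set2_mul.
move=> Hs.
pose F := {dffun forall s : 'I_m, 'I_(n s)}.
apply: (@decomp_fin _ _ _ _ (F * F * {ffun 'I_m -> bool})%type
  (fun x => A (fun s => x.1.1 s) (fun s => x.1.2 s) *
            \prod_(s < m) cc R (x.1.1 s) (x.1.2 s) (x.2 s))
  (fun x s => ww R (x.1.1 s) (x.1.2 s) (x.2 s))).
move=> i j.
transitivity (\sum_(k : F) \sum_(l : F) A (fun s => k s) (fun s => l s) *
   \prod_(s < m) \sum_(t : bool) cc R (k s) (l s) t *
       (ww R (k s) (l s) t (i s) * ww R (k s) (l s) t (j s))).
  pose k0 : F := finfun (fun s => mn (i s) (j s)).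
  pose l0 : F := finfun (fun s => mx (i s) (j s)).
  have P : forall k l : F, \prod_(s < m) \sum_(t : bool) cc R (k s) (l s) t *
       (ww R (k s) (l s) t (i s) * ww R (k s) (l s) t (j s))
       = ((k == k0) && (l == l0))%:R.
    move=> k l; under eq_bigr do rewrite S_ind.
    case E: ((k == k0) && (l == l0)).
      move/andP: E => [/eqP -> /eqP ->].
      by rewrite (eq_bigr (fun=> 1)) ?big1_eq // => s _; rewrite /k0 /l0 !ffunE !eqxx.
    have [s Hs0] : exists s, ~~ ((k s == mn (i s) (j s)) && (l s == mx (i s) (j s))).
      apply/existsP; apply: contraFT E => /existsPn H; apply/andP; split;
        apply/eqP/ffunP => s; rewrite ffunE; have := H s; rewrite negbK;
        by case/andP => /eqP ? /eqP ?.
    by rewrite (bigD1 s) //= (negbTE Hs0) mul0r.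
  under eq_bigr do under eq_bigr do rewrite P.
  rewrite (bigD1 k0) //= [X in _ + X]big1 ?addr0; last first.
    by move=> k nk; apply: big1 => l _; rewrite (negbTE nk) /= mulr0.
  rewrite (bigD1 l0) //= [X in _ + X]big1 ?addr0; last first.
    by move=> l nl; rewrite (negbTE nl) andbF /= mulr0.
  rewrite !eqxx mulr1; apply: Hs => s; rewrite !ffunE /mn /mx.
  by case: leqP => _ //; rewrite setUC.
under eq_bigr => k _ do under eq_bigr => l _ do rewrite bigA_distr_bigA mulr_sumr.
rewrite pair_bigA pair_bigA; apply: eq_bigr => -[[k l] t] _ /=.
by rewrite hrank1E -mulrA -big_split.
Qed.
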